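(* Let $H$ be a real $d\times d$ matrix partitioned into blocks $(H_{ij})_{1\le i,j\le n}$ with $H_{ij}\in\mathbb{R}^{d_i\times d_j}$, $\sum_i d_i=d$. Let $S=(H+H^\top)/2$ be its symmetric part and $H_d=\bigoplus_i H_{ii}$ the block-diagonal matrix formed by its diagonal blocks. For a square matrix $A$ write $\lambda(A)=\mathrm{Re}(\mathrm{Spec}(A))$ for the set of real parts of its eigenvalues. Then the following implications hold: (1) $H\prec 0\Rightarrow \max\lambda(H)<0$; (2) $H\prec 0\Rightarrow \max\lambda(H_d)<0$; (3) $\max\lambda(H)<0\Rightarrow\min\lambda(H)<0$; (4) $\max\lambda(H_d)<0\Rightarrow\min\lambda(H_d)<0$; (5) $\max\lambda(H)<0\Rightarrow \min\lambda(H_d)<0$; (6) $\max\lambda(H_d)<0\Rightarrow\min\lambda(H)<0$; (7) $\min\lambda(H)<0\Rightarrow\min\lambda(S)<0$; (8) $\min\lambda(H_d)<0\Rightarrow\min\lambda(S)<0$. Moreover, none of these implications is an equivalence: for each of them there exists such a partitioned matrix $H$ for which the conclusion holds but the hypothesis fails.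
   Context: For a (not necessarily symmetric) real square matrix $H$, $H\prec 0$ means $u^\top H u<0$ for all nonzero $u$ (equivalently, the symmetric part of $H$ is negative definite). *)

(* Defs.v *)
(* real matrices over an arbitrary real closed field R,
   eigenvalues taken in the algebraic closure R[i] (mathcomp-real-closed). *)
From HB Require Import structures.
From mathcomp Require Import all_boot all_order all_algebra.
From mathcomp Require Import complex.
Set Implicit Arguments. Unset Strict Implicit. Unset Printing Implicit Defensive.
Import Order.TTheory GRing.Theory Num.Theory.
Local Open Scope ring_scope.

Definition cplx_mx (R : rcfType) (m : nat) (A : 'M[R]_m) : 'M[R[i]]_m :=
  map_mx (fun x : R => x%:C%C) A.

Definition spec (R : rcfType) (m : nat) (A : 'M[R]_m) : pred R[i] :=
  fun z => eigenvalue (cplx_mx A) z.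

Definition lam (R : rcfType) (m : nat) (A : 'M[R]_m) : R -> Prop :=
  fun r => exists2 z : R[i], spec A z & complex.Re z = r.

(* max lambda(A) < 0  : every element of lambda(A) is negative
   (lambda(A) is finite and, for m >= 1, nonempty, so this is exactly max < 0) *)
Definition max_lam_neg (R : rcfType) (m : nat) (A : 'M[R]_m) : Prop :=
  forall r, lam A r -> r < 0.

Definition min_lam_neg (R : rcfType) (m : nat) (A : 'M[R]_m) : Prop :=
  exists2 r, lam A r & r < 0.

Definition negdef (R : rcfType) (m : nat) (H : 'M[R]_m) : Prop :=
  forall u : 'cV[R]_m, u != 0 -> (u^T *m H *m u) 0 0 < 0.

Definition sympart (R : rcfType) (m : nat) (H : 'M[R]_m) : 'M[R]_m :=
  2^-1 *: (H + H^T).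

Definition blkdiag (R : rcfType) (n : nat) (ds : 'I_n -> nat)
  (H : 'M[R]_(\sum_(i < n) ds i)) : 'M[R]_(\sum_(i < n) ds i) :=
  \mxdiag_(i < n) submxblock H i i.

(* Main.v *)
Set Warnings "-notation-overridden,-ambiguous-paths,-deprecated".
Require Import Defs.
From HB Require Import structures.
From mathcomp Require Import all_boot all_order all_algebra.
From mathcomp Require Import complex ring lra spectral.
Import Order.TTheory GRing.Theory Num.Theory Num.Def.
Local Open Scope ring_scope.
Import tagnat.
Set Implicit Arguments. Unset Strict Implicit. Unset Printing Implicit Defensive.
Lemma blkdiagE (R : rcfType) (n : nat) (ds : 'I_n -> nat)
  (H : 'M[R]_(\sum_(i < n) ds i)) k l :
  blkdiag H k l = if sig1 k == sig1 l then H k l else 0.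
Proof.
rewrite /blkdiag /mxdiag mxE; case: eqP => [e|_]; last by rewrite mxE.
have -> : H k l = H (Rank (sig1 k) (sig2 k)) (Rank (sig1 l) (sig2 l)) by rewrite !sig2K.
move: (sig2 l); rewrite -e => x.
by rewrite conform_mx_id /submxblock mxE.
Qed.

Section S.
Variable R : rcfType.
Local Notation C := (R[i]).

Definition rq m (A : 'M[R]_m) (x : 'I_m -> R) := \sum_k \sum_l x k * A k l * x l.
Definition cq m (A : 'M[R]_m) (v : 'I_m -> C) :=
  \sum_k \sum_l v k * ((A k l)%:C)%C * ((v l)^*)%C.

Lemma ReCq m (A : 'M[R]_m) v :
  complex.Re (cq A v) = rq A (fun k => complex.Re (v k)) + rq A (fun k => complex.Im (v k)).
Proof.
rewrite /cq /rq raddf_sum -big_split; apply: eq_bigr => k _.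
rewrite raddf_sum -big_split; apply: eq_bigr => l _ /=.
case: (v k) => a b; case: (v l) => c d /=; ring.
Qed.

Lemma cq_eig m (A : 'M[R]_m) (v : 'rV[C]_m) a :
  v *m cplx_mx A = a *: v -> cq A (v 0) = a * \sum_l v 0 l * ((v 0 l)^*)%C.
Proof.
move=> /matrixP e; rewrite /cq exchange_big mulr_sumr; apply: eq_bigr => l _.
rewrite -mulr_suml mulrA; congr (_ * _).
by have := e 0 l; rewrite !mxE => <-; apply: eq_bigr => k _; rewrite mxE.
Qed.

Lemma norm_sum m (v : 'I_m -> C) :
  \sum_l v l * ((v l)^*)%C = ((\sum_l (complex.Re (v l) ^+ 2 + complex.Im (v l) ^+ 2))%:C)%C.
Proof.
rewrite rmorph_sum; apply: eq_bigr => l _.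
case: (v l) => a b; apply/eqP; rewrite eq_complex /=; apply/andP; split; apply/eqP; ring.
Qed.

Lemma Re_mulr (a : C) (r : R) : complex.Re (a * (r%:C)%C) = complex.Re a * r.
Proof. case: a => x y /=; ring. Qed.

Lemma norm_sum_gt0 m (v : 'rV[C]_m) : v != 0 ->
  0 < \sum_l (complex.Re (v 0 l) ^+ 2 + complex.Im (v 0 l) ^+ 2).
Proof.
move=> vn0.
have [k Hk|Hn] := pickP (fun k => v 0 k != 0); last first.
  case/negP: vn0; apply/eqP/matrixP => i j; rewrite ord1 mxE.
  by have := Hn j => /= /negbFE/eqP.
rewrite (bigD1 k) //=.
have h1 : 0 < complex.Re (v 0 k) ^+ 2 + complex.Im (v 0 k) ^+ 2.
  move: Hk; case: (v 0 k) => a b; rewrite eq_complex /= negb_and => /orP[] h.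
    by apply: ltr_pwDl; rewrite ?sqr_ge0 // exprn_even_gt0.
  by apply: ltr_pwDr; rewrite ?sqr_ge0 // exprn_even_gt0.
have h2 : 0 <= \sum_(i < m | i != k) (complex.Re (v 0 i) ^+ 2 + complex.Im (v 0 i) ^+ 2).
  by apply: sumr_ge0 => i _; rewrite addr_ge0 ?sqr_ge0.
lra.
Qed.

Lemma eig_rq m (A : 'M[R]_m) z : spec A z -> exists x y : 'I_m -> R,
  exists2 N : R, 0 < N & complex.Re z * N = rq A x + rq A y /\ (exists k, x k != 0 \/ y k != 0).
Proof.
move=> /eigenvalueP [v ev vn0].
exists (fun k => complex.Re (v 0 k)), (fun k => complex.Im (v 0 k)).
exists (\sum_l (complex.Re (v 0 l) ^+ 2 + complex.Im (v 0 l) ^+ 2)); first exact: norm_sum_gt0.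
split; first by rewrite -ReCq (cq_eig ev) norm_sum Re_mulr.
have [k Hk|Hn] := pickP (fun k => v 0 k != 0); last first.
  case/negP: vn0; apply/eqP/matrixP => i j; rewrite ord1 mxE.
  by have := Hn j => /= /negbFE/eqP.
exists k; move: Hk; case: (v 0 k) => a b; rewrite eq_complex /= negb_and => /orP[] h; by [left|right].
Qed.


Lemma qfE m (H : 'M[R]_m) (u : 'cV_m) : (u^T *m H *m u) 0 0 = rq H (fun k => u k 0).
Proof.
rewrite mxE /rq; under eq_bigr do rewrite mxE mulr_suml.
rewrite exchange_big; apply: eq_bigr => k _; apply: eq_bigr => l _.
by rewrite mxE.
Qed.

Lemma negdef_rq m (H : 'M[R]_m) : negdef H ->
  forall x, ((exists k, x k != 0) -> rq H x < 0) /\ rq H x <= 0.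
Proof.
move=> nd x.
have key : (exists k, x k != 0) -> rq H x < 0.
  move=> [k hk]; have := nd (\col_k x k).
  rewrite qfE; under [rq _ _]eq_bigr do under eq_bigr do rewrite !mxE.
  apply; apply/negP => /eqP/matrixP/(_ k 0); rewrite !mxE => e.
  by rewrite e eqxx in hk.
split => //.
have [k hk|hn] := pickP (fun k => x k != 0).
  by apply/ltW/key; exists k.
rewrite /rq big1 // => k _; have := hn k => /= /negbFE/eqP ->.
by rewrite big1 // => l _; rewrite !mul0r.
Qed.

Lemma P1 m (H : 'M[R]_m) : negdef H -> max_lam_neg H.
Proof.
move=> nd r [z sz <-].
have [x [y [N N0 [e [k hk]]]]] := eig_rq sz.
have [hx1 hx2] := negdef_rq nd x.
have [hy1 hy2] := negdef_rq nd y.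
have : rq H x + rq H y < 0.
  case: hk => hk.
    have := hx1 (ex_intro _ k hk); lra.
  have := hy1 (ex_intro _ k hk); lra.
rewrite -e => h; nra.
Qed.


Lemma blk_rq n (ds : 'I_n -> nat) (H : 'M[R]_(\sum_(i < n) ds i)) x :
  rq (blkdiag H) x = \sum_i rq H (fun k => if sig1 k == i then x k else 0).
Proof.
rewrite /rq [RHS]exchange_big; apply: eq_bigr => k _.
rewrite [RHS]exchange_big; apply: eq_bigr => l _.
rewrite [RHS](bigD1 (sig1 k)) //= eqxx [X in _ + X]big1 ?addr0; last first.
  by move=> i /negPf ne; rewrite eq_sym ne !mul0r.
rewrite blkdiagE; case: eqP => [->|ne]; first by rewrite eqxx.
by case: eqP => [e|_]; [case: ne; rewrite e | rewrite !mulr0 mul0r].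
Qed.

Lemma P2 n (ds : 'I_n -> nat) (H : 'M[R]_(\sum_(i < n) ds i)) :
  negdef H -> negdef (blkdiag H).
Proof.
move=> nd u un0; rewrite qfE blk_rq.
have [k hk|hn] := pickP (fun k => u k 0 != 0); last first.
  case/negP: un0; apply/eqP/matrixP => i j; rewrite ord1 mxE.
  by have := hn i => /= /negbFE/eqP.
rewrite [X in X < 0](bigD1 (sig1 k)) //=.
have h1 := (negdef_rq nd (fun k0 => if sig1 k0 == sig1 k then u k0 0 else 0)).1.
have h2 : \sum_(i < n | i != sig1 k) rq H (fun k0 => if sig1 k0 == i then u k0 0 else 0) <= 0.
  by apply: sumr_le0 => i _; exact: (negdef_rq nd _).2.
have : rq H (fun k0 => if sig1 k0 == sig1 k then u k0 0 else 0) < 0.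
  by apply: h1; exists k; rewrite eqxx.
lra.
Qed.


Local Open Scope sesquilinear_scope.

Lemma cqE m (S : 'M[R]_m) (v : 'rV[C]_m) : cq S (v 0) = (v *m cplx_mx S *m v ^t*) 0 0.
Proof.
rewrite mxE /cq exchange_big; apply: eq_bigr => l _.
rewrite !mxE mulr_suml; apply: eq_bigr => k _.
by rewrite !mxE.
Qed.

Lemma Re_sum m (f : 'I_m -> C) : complex.Re (\sum_k f k) = \sum_k complex.Re (f k).
Proof. by rewrite raddf_sum. Qed.

Lemma Re_dconj (w d : C) : complex.Re (w * d * conjC w) =
  complex.Re d * (complex.Re w ^+ 2 + complex.Im w ^+ 2).
Proof.
change (conjC w) with (w^*)%C.
case: w => a b; case: d => c e /=; ring.
Qed.

Lemma SP m (S : 'M[R]_m) : S^T = S -> (exists x, rq S x < 0) -> min_lam_neg S.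
Proof.
move=> Ssym [x hx].
pose Sc := cplx_mx S.
have herm : Sc \is hermsymmx.
  apply/is_hermitianmxP; apply/matrixP => i j; rewrite !mxE expr0 mul1r.
  change (conjC ((S j i)%:C)%C) with (((S j i)%:C)^*)%C; rewrite conjc_real.
  by move/matrixP: Ssym => /(_ j i); rewrite mxE => ->.
have /orthomx_spectralP eS := hermitian_normalmx herm.
move: eS; set P := spectralmx Sc; set d := spectral_diag Sc => eS.
have Pu : P \is unitarymx := spectral_unitarymx Sc.
have Pun : P \in unitmx := spectral_unit Sc.
have [k hk | hall] := pickP (fun k => complex.Re (d 0 k) < 0).
  exists (complex.Re (d 0 k)) => //; exists (d 0 k) => //.
  apply/eigenvalueP; exists (row k P).
    rewrite -row_mul -/Sc eS !mulmxA mulmxV // mul1mx row_mul row_diag_mx.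
    by rewrite -scalemxAl -rowE.
  apply/eqP => /(congr1 (mulmx^~ (invmx P))); rewrite rowE mulmxK // mul0mx.
  by move=> /matrixP /(_ 0 k); rewrite !mxE !eqxx /= => /eqP; rewrite oner_eq0.
exfalso.
pose v : 'rV[C]_m := \row_k ((x k)%:C)%C.
have e1 : rq S x = complex.Re (cq S (v 0)).
  rewrite ReCq.
  have -> : rq S (fun k => complex.Im (v 0 k)) = 0.
    by rewrite /rq big1 // => k _; rewrite big1 // => l _; rewrite !mxE /= mulr0.
  by rewrite addr0 /rq; apply: eq_bigr => k _; apply: eq_bigr => l _; rewrite !mxE.
pose w := v *m P ^t*.
have e2 : cq S (v 0) = \sum_k w 0 k * d 0 k * conjC (w 0 k).
  rewrite cqE -/Sc eS invmx_unitary //.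
  have -> : v *m (P ^t* *m diag_mx d *m P) *m v ^t* = w *m diag_mx d *m w ^t*.
    by rewrite /w trmx_mul map_mxM trmxCK !mulmxA.
  rewrite mxE; apply: eq_bigr => l _.
  by rewrite mul_mx_diag !mxE.
have : 0 <= complex.Re (cq S (v 0)).
  rewrite e2 Re_sum; apply: sumr_ge0 => l _.
  rewrite Re_dconj; apply: mulr_ge0; last by rewrite addr_ge0 ?sqr_ge0.
  by have := hall l => /= /negbT; rewrite -leNgt.
rewrite -e1; lra.
Qed.


Lemma sum_neg m (f : 'I_m -> R) : \sum_i f i < 0 -> exists i, f i < 0.
Proof.
have [k hk|hall] := pickP (fun k => f k < 0); first by exists k.
have : 0 <= \sum_i f i.
  by apply: sumr_ge0 => i _; have := hall i => /= /negbT; rewrite -leNgt.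
move=> h1 h2; lra.
Qed.

Lemma rq_sym m (H : 'M[R]_m) x : rq (sympart H) x = rq H x.
Proof.
have eT : rq H x = \sum_k \sum_l x k * H l k * x l.
  rewrite /rq exchange_big; apply: eq_bigr => k _; apply: eq_bigr => l _; ring.
have : rq (sympart H) x = 2^-1 * (rq H x + \sum_k \sum_l x k * H l k * x l).
  rewrite /rq -big_split mulr_sumr; apply: eq_bigr => k _.
  rewrite -big_split mulr_sumr; apply: eq_bigr => l _; rewrite !mxE /=; ring.
move=> ->; lra.
Qed.

Lemma sympart_sym m (H : 'M[R]_m) : (sympart H)^T = sympart H.
Proof. by apply/matrixP => i j; rewrite !mxE addrC. Qed.

Lemma L7 m (H : 'M[R]_m) : (exists x, rq H x < 0) -> min_lam_neg (sympart H).
Proof.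
move=> [x hx]; apply: SP; first exact: sympart_sym.
by exists x; rewrite rq_sym.
Qed.

Lemma P7 m (H : 'M[R]_m) : min_lam_neg H -> min_lam_neg (sympart H).
Proof.
move=> [r [z sz <-] hr].
have [x [y [N N0 [e _]]]] := eig_rq sz.
have h : rq H x + rq H y < 0 by rewrite -e; nra.
apply: L7; case: (ltrP (rq H x) 0) => hx; first by exists x.
by exists y; lra.
Qed.

Lemma P8 n (ds : 'I_n -> nat) (H : 'M[R]_(\sum_(i < n) ds i)) :
  min_lam_neg (blkdiag H) -> min_lam_neg (sympart H).
Proof.
move=> [r [z sz <-] hr].
have [x [y [N N0 [e _]]]] := eig_rq sz.
have h : rq (blkdiag H) x + rq (blkdiag H) y < 0 by rewrite -e; nra.
apply: L7; case: (ltrP (rq (blkdiag H) x) 0) => hx.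
  by move: hx; rewrite blk_rq => /sum_neg [i hi]; eexists; exact: hi.
have hy : rq (blkdiag H) y < 0 by lra.
by move: hy; rewrite blk_rq => /sum_neg [i hi]; eexists; exact: hi.
Qed.

Lemma trig_eig m (T : 'M[C]_m) k : is_trig_mx T -> eigenvalue T (T k k).
Proof.
move=> Tt; rewrite eigenvalue_root_char char_poly_trig // /root horner_prod.
by apply/prodf_eq0; exists k => //; rewrite !hornerE subrr.
Qed.

Lemma TR m (A : 'M[R]_m) : (0 < m)%N -> exists t : 'I_m -> C,
  (forall k, spec A (t k)) /\ \sum_k t k = ((\tr A)%:C)%C.
Proof.
move=> m0; have [P Pu] := Schur (cplx_mx A) m0.
have Pun := unitarymx_unit Pu.
rewrite /similar_to /= conjumx //.
set T := P *m cplx_mx A *m invmx P => Tt.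
exists (fun k => T k k); split.
  move=> k; have /eigenvalueP [v ev vn0] := trig_eig k Tt.
  apply/eigenvalueP; exists (v *m P).
    have -> : v *m P *m cplx_mx A = v *m T *m P by rewrite /T !mulmxA mulmxKV.
    by rewrite ev -scalemxAl.
  apply/eqP => /(congr1 (mulmx^~ (invmx P))); rewrite mulmxK // mul0mx.
  by apply/eqP.
have -> : \sum_k T k k = \tr T by [].
rewrite /T mxtrace_mulC mulmxA mulVmx // mul1mx.
by rewrite /mxtrace rmorph_sum; apply: eq_bigr => i _; rewrite mxE.
Qed.

Lemma Lmax_tr m (A : 'M[R]_m) : (0 < m)%N -> max_lam_neg A -> \tr A < 0.
Proof.
move=> m0 hA; have [t [ht e]] := TR A m0.
have -> : \tr A = \sum_k complex.Re (t k) by rewrite -Re_sum e.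
rewrite (bigD1 (Ordinal m0)) //=.
have h1 : complex.Re (t (Ordinal m0)) < 0 by apply: hA; exists (t (Ordinal m0)).
have h2 : \sum_(i < m | i != Ordinal m0) complex.Re (t i) <= 0.
  by apply: sumr_le0 => i _; apply/ltW/hA; exists (t i).
lra.
Qed.

Lemma Lmin_tr m (A : 'M[R]_m) : (0 < m)%N -> \tr A < 0 -> min_lam_neg A.
Proof.
move=> m0 hA; have [t [ht e]] := TR A m0.
have : \sum_k complex.Re (t k) < 0 by rewrite -Re_sum e.
by move=> /sum_neg [i hi]; exists (complex.Re (t i)) => //; exists (t i).
Qed.

Lemma tr_blk n (ds : 'I_n -> nat) (H : 'M[R]_(\sum_(i < n) ds i)) :
  \tr (blkdiag H) = \tr H.
Proof. by rewrite /mxtrace; apply: eq_bigr => i _; rewrite blkdiagE eqxx. Qed.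

End S.

Definition Mx (R : rcfType) m (a b c : R) : 'M[R]_m :=
  \matrix_(k, l) (if k == l then (if (k : nat) == 0%N then a else b)
                  else if (l < k)%N then c else 0).

Section Ex.
Variable R : rcfType.
Local Notation C := (R[i]).

Lemma Mx_trig m (a b c : R) : is_trig_mx (cplx_mx (Mx m a b c)).
Proof.
apply/is_trig_mxP => i j lij; rewrite !mxE.
have -> : (i == j) = false by apply/negbTE; rewrite neq_ltn lij.
by rewrite ltnNge ltnW.
Qed.

Lemma spec_Mx m (a b c : R) z : spec (Mx m a b c) z -> z = (a%:C)%C \/ z = (b%:C)%C.
Proof.
rewrite /spec eigenvalue_root_char char_poly_trig ?Mx_trig // /root horner_prod.
move=> /prodf_eq0 [k _]; rewrite !hornerE subr_eq0 => /eqP ->; rewrite !mxE eqxx.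
by case: ifP; [left|right].
Qed.

Lemma spec_Mx_a m (a b c : R) (h : (0 < m)%N) : spec (Mx m a b c) (a%:C)%C.
Proof.
have := trig_eig (Ordinal h) (Mx_trig m a b c).
by rewrite !mxE eqxx.
Qed.

Lemma spec_Mx_b m (a b c : R) (h : (1 < m)%N) : spec (Mx m a b c) (b%:C)%C.
Proof.
have := trig_eig (Ordinal h) (Mx_trig m a b c).
by rewrite !mxE eqxx.
Qed.

Lemma max_Mx m (a b c : R) : a < 0 -> b < 0 -> max_lam_neg (Mx m a b c).
Proof. by move=> ha hb r [z hz <-]; case: (spec_Mx hz) => ->. Qed.

Lemma notmin_Mx m (a b c : R) : 0 <= a -> 0 <= b -> ~ min_lam_neg (Mx m a b c).
Proof. move=> ha hb [r [z hz <-]]; case: (spec_Mx hz) => -> /=; lra. Qed.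

Lemma min_Mx m (a b c : R) : (0 < m)%N -> a < 0 -> min_lam_neg (Mx m a b c).
Proof. by move=> h ha; exists a => //; exists (a%:C)%C => //; apply: spec_Mx_a. Qed.

Lemma notmax_Mx m (a b c : R) : (1 < m)%N -> 0 <= b -> ~ max_lam_neg (Mx m a b c).
Proof.
move=> h hb hm; have : b < 0 by apply: hm; exists (b%:C)%C => //; apply: spec_Mx_b.
lra.
Qed.

Lemma blk_Mx n (a b c : R) :
  blkdiag (Mx (\sum_(i < n) (fun _ => 1%N) i) a b c) = Mx _ a b 0.
Proof.
apply/matrixP => k l; rewrite blkdiagE !mxE.
have -> : (sig1 k == sig1 l) = (k == l).
  apply/eqP/eqP => [e|->//]; rewrite -(sig2K k) -(sig2K l).
  move: (sig2 k) (sig2 l); rewrite e => u w.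
  by rewrite (ord1 u) (ord1 w).
by case: (k == l); case: ifP.
Qed.

Lemma notnegdef_E1 m (e : m = 2%N) : ~ negdef (Mx m (-1) (-1) (4 : R)).
Proof.
subst m => h; have := h (const_mx 1).
rewrite qfE /rq !big_ord_recr !big_ord0 /= !mxE /=.
have nz : const_mx 1 != 0 :> 'cV[R]_2.
  by apply/negP => /eqP/matrixP/(_ 0 0); rewrite !mxE => /eqP; rewrite oner_eq0.
move/(_ nz); lra.
Qed.

Lemma neg_E7 m (e : m = 2%N) : exists x, rq (Mx m 1 1 (4 : R)) x < 0.
Proof.
subst m; exists (fun k : 'I_2 => if k == 0 then 1 else -1).
rewrite /rq !big_ord_recr !big_ord0 /= !mxE /=; lra.
Qed.

Lemma sz2 : (\sum_(i < 2) (fun _ => 1%N) i = 2)%N.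
Proof. by rewrite big_ord_recr big_ord1. Qed.

End Ex.
Theorem proposition2 (R : rcfType) :
  (forall (n : nat) (ds : 'I_n -> nat) (H : 'M[R]_(\sum_(i < n) ds i)),
     (0 < \sum_(i < n) ds i)%N ->
     (negdef H -> max_lam_neg H) /\
         (negdef H -> max_lam_neg (blkdiag H)) /\
         (max_lam_neg H -> min_lam_neg H) /\
         (max_lam_neg (blkdiag H) -> min_lam_neg (blkdiag H)) /\
         (max_lam_neg H -> min_lam_neg (blkdiag H)) /\
         (max_lam_neg (blkdiag H) -> min_lam_neg H) /\
         (min_lam_neg H -> min_lam_neg (sympart H)) /\
         (min_lam_neg (blkdiag H) -> min_lam_neg (sympart H))) /\
  (exists (n : nat) (ds : 'I_n -> nat) (H : 'M[R]_(\sum_(i < n) ds i)),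
        [/\ (0 < n)%N, (forall i, 0 < ds i)%N,
            max_lam_neg H & ~ negdef H]) /\
      (exists (n : nat) (ds : 'I_n -> nat) (H : 'M[R]_(\sum_(i < n) ds i)),
        [/\ (0 < n)%N, (forall i, 0 < ds i)%N,
            max_lam_neg (blkdiag H) & ~ negdef H]) /\
      (exists (n : nat) (ds : 'I_n -> nat) (H : 'M[R]_(\sum_(i < n) ds i)),
        [/\ (0 < n)%N, (forall i, 0 < ds i)%N,
            min_lam_neg H & ~ max_lam_neg H]) /\
      (exists (n : nat) (ds : 'I_n -> nat) (H : 'M[R]_(\sum_(i < n) ds i)),
        [/\ (0 < n)%N, (forall i, 0 < ds i)%N,
            min_lam_neg (blkdiag H) & ~ max_lam_neg (blkdiag H)]) /\
      (exists (n : nat) (ds : 'I_n -> nat) (H : 'M[R]_(\sum_(i < n) ds i)),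
        [/\ (0 < n)%N, (forall i, 0 < ds i)%N,
            min_lam_neg (blkdiag H) & ~ max_lam_neg H]) /\
      (exists (n : nat) (ds : 'I_n -> nat) (H : 'M[R]_(\sum_(i < n) ds i)),
        [/\ (0 < n)%N, (forall i, 0 < ds i)%N,
            min_lam_neg H & ~ max_lam_neg (blkdiag H)]) /\
      (exists (n : nat) (ds : 'I_n -> nat) (H : 'M[R]_(\sum_(i < n) ds i)),
        [/\ (0 < n)%N, (forall i, 0 < ds i)%N,
            min_lam_neg (sympart H) & ~ min_lam_neg H]) /\
      (exists (n : nat) (ds : 'I_n -> nat) (H : 'M[R]_(\sum_(i < n) ds i)),
        [/\ (0 < n)%N, (forall i, 0 < ds i)%N,
            min_lam_neg (sympart H) & ~ min_lam_neg (blkdiag H)]).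
Proof.
split.
  move=> n ds H d0.
  split; first exact: P1.
  split; first by move/P2/P1.
  split; first by move=> h; apply: (Lmin_tr d0); apply: Lmax_tr.
  split; first by move=> h; apply: (Lmin_tr d0); apply: Lmax_tr.
  split; first by move=> h; apply: (Lmin_tr d0); rewrite tr_blk; exact: Lmax_tr d0 h.
  split; first by move=> h; apply: (Lmin_tr d0); rewrite -(tr_blk H); exact: Lmax_tr d0 h.
  split; first exact: P7.
  exact: P8.
have p0 : (0 < \sum_(i < 2) (fun _ => 1%N) i)%N by rewrite sz2.
have p1 : (1 < \sum_(i < 2) (fun _ => 1%N) i)%N by rewrite sz2.
split.
  exists 2%N, (fun _ => 1%N), (Mx _ (-1) (-1) 4); split => //.
    by apply: max_Mx; lra.
  exact: notnegdef_E1 sz2.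
split.
  exists 2%N, (fun _ => 1%N), (Mx _ (-1) (-1) 4); split => //.
    by rewrite blk_Mx; apply: max_Mx; lra.
  exact: notnegdef_E1 sz2.
split.
  exists 2%N, (fun _ => 1%N), (Mx _ (-1) 1 0); split => //.
    by apply: min_Mx => //; lra.
  by apply: notmax_Mx => //; lra.
split.
  exists 2%N, (fun _ => 1%N), (Mx _ (-1) 1 0); split => //.
    by rewrite blk_Mx; apply: min_Mx => //; lra.
  by rewrite blk_Mx; apply: notmax_Mx => //; lra.
split.
  exists 2%N, (fun _ => 1%N), (Mx _ (-1) 1 0); split => //.
    by rewrite blk_Mx; apply: min_Mx => //; lra.
  by apply: notmax_Mx => //; lra.
split.
  exists 2%N, (fun _ => 1%N), (Mx _ (-1) 1 0); split => //.
    by apply: min_Mx => //; lra.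
  by rewrite blk_Mx; apply: notmax_Mx => //; lra.
split.
  exists 2%N, (fun _ => 1%N), (Mx _ 1 1 4); split => //.
    by apply: L7; apply: neg_E7 sz2.
  by apply: notmin_Mx; lra.
exists 2%N, (fun _ => 1%N), (Mx _ 1 1 4); split => //.
  by apply: L7; apply: neg_E7 sz2.
by rewrite blk_Mx; apply: notmin_Mx; lra.
Qed.
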